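(* Let $\xi,\xi'\in\mathscr C$ with $D_i^\#(\xi)=\xi$ for every $i\in I$. Then $D_0^\#(\xi\xi')=\xi\,D_0^\#(\xi')$.
   Context: $G$ is a simply connected simple algebraic group over $\mathbb C$ with maximal torus $H$, Weyl group $W$, weight lattice $P$, simple roots $\alpha_i$ and simple reflections $s_i$ ($i\in I$), highest root $\vartheta$ with coroot $\vartheta^\vee$ and reflection $s_\vartheta$, coroot lattice $Q^\vee$ (on which $W$ acts). $\mathbb C(P)$ is the fraction field of the group algebra $\mathbb CP$ (basis $e^\lambda$), with $W$ acting by $w(e^\lambda)=e^{w\lambda}$. $\mathscr C=\mathbb C(P)\otimes\mathbb CQ^\vee$, with basis symbols $t_\beta$, is the commutative algebra with $(f\otimes t_\beta)(g\otimes t_\gamma)=fg\otimes t_{\beta+\gamma}$. The $\mathbb C$-linear operators $D_i^\#$ ($i\in I$) and $D_0^\#$ on $\mathscr C$ are $$D_i^\#(f\otimes t_\beta)=\frac{f}{1-e^{\alpha_i}}\otimes t_\beta-\frac{e^{\alpha_i}s_i(f)}{1-e^{\alpha_i}}\otimes t_{s_i\beta},$$ $$D_0^\#(f\otimes t_\beta)=\frac{f}{1-e^{-\vartheta}}\otimes t_\beta-\frac{e^{-\vartheta}s_\vartheta(f)}{1-e^{-\vartheta}}\otimes t_{s_\vartheta(\beta-\vartheta^\vee)}.$$ *)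

(* Defs.v *)
From HB Require Import structures.
From mathcomp Require Import all_boot all_order all_algebra.
Import Order.TTheory GRing.Theory Num.Theory.
From mathcomp Require Import complex.
From mathcomp Require Import Rstruct.
From mathcomp Require Import mpoly.
Set Implicit Arguments. Unset Strict Implicit. Unset Printing Implicit Defensive.
Local Open Scope ring_scope.

Definition CC : numClosedFieldType := complex Rdefinitions.R.

(* Root data of a simply connected simple G of rank n, encoded by its  *)
(* Cartan matrix A, with A i j = <alpha_j, alpha_i^vee>, I = 'I_n.     *)
(* Weights lambda in P are written in the basis of fundamental weights *)
(* (lambda 0 i = <lambda, alpha_i^vee>); coweights beta in Q^vee are    *)
(* written in the basis of simple coroots.                             *)
Definition wt (n : nat) := 'rV[int]_n.
Definition cowt (n : nat) := 'rV[int]_n.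

Definition cartan_finite_indec (n : nat) (A : 'M[int]_n) : Prop :=
  (0 < n)%N /\
  [/\ (forall i, A i i = 2),
      (forall i j, i != j -> A i j <= 0),
      (forall i j, A i j = 0 <-> A j i = 0),
      (exists d : 'I_n -> int,
          [/\ forall i, 0 < d i,
              forall i j, d i * A i j = d j * A j i &
              forall x : 'I_n -> rat, (exists i, x i != 0) ->
                0 < \sum_(i < n) \sum_(j < n) x i * (d i * A i j)%:~R * x j])
    & (forall S : {set 'I_n}, S != set0 -> S != setT ->
          exists i, exists j, [/\ i \in S, j \notin S & A i j != 0])].

Definition alpha n (A : 'M[int]_n) (j : 'I_n) : wt n := \row_i A i j.
Definition alphav n (i : 'I_n) : cowt n := \row_k (k == i)%:Z.

Definition wpair n (l : wt n) (b : cowt n) : int := \sum_(i < n) l 0 i * b 0 i.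

Definition refl_wt n (g : wt n) (gv : cowt n) (l : wt n) : wt n :=
  l - g *~ wpair l gv.
Definition refl_co n (g : wt n) (gv : cowt n) (b : cowt n) : cowt n :=
  b - gv *~ wpair g b.

Definition s_wt n (A : 'M[int]_n) (i : 'I_n) := refl_wt (alpha A i) (alphav i).
Definition s_co n (A : 'M[int]_n) (i : 'I_n) := refl_co (alpha A i) (alphav i).

(* Weyl group elements as words in the simple reflections *)
Definition act_wt n (A : 'M[int]_n) (w : seq 'I_n) (l : wt n) : wt n :=
  foldr (s_wt A) l w.
Definition act_co n (A : 'M[int]_n) (w : seq 'I_n) (b : cowt n) : cowt n :=
  foldr (s_co A) b w.

Definition is_root n (A : 'M[int]_n) (g : wt n) : Prop :=
  exists (w : seq 'I_n) (i : 'I_n), g = act_wt A w (alpha A i).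

Definition pos_comb n (A : 'M[int]_n) (g : wt n) : Prop :=
  exists c : 'I_n -> nat, g = \sum_(j < n) alpha A j *+ c j.

Definition highest_root n (A : 'M[int]_n) (th : wt n) : Prop :=
  is_root A th /\ forall b, is_root A b -> pos_comb A (th - b).

Definition coroot_of n (A : 'M[int]_n) (th : wt n) (thv : cowt n) : Prop :=
  exists (w : seq 'I_n) (i : 'I_n),
    th = act_wt A w (alpha A i) /\ thv = act_co A w (alphav i).

(* C(P): the fraction field of CP = C[x_1^{+-1},...,x_n^{+-1}], i.e.    *)
(* C(x_1,...,x_n), with e^{lambda} = prod_i x_i^{lambda_i}              *)
(* (x_i = e^{varpi_i}).                                                 *)
Definition KP (n : nat) := {fraction {mpoly CC[n]}}.

Definition epow n (l : wt n) : KP n :=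
  \prod_(i < n) (tofrac ('X_i : {mpoly CC[n]})) ^ (l 0 i).

Definition mono_wt n (m : 'X_{1..n}) : wt n := \row_i (m i)%:Z.

(* the field automorphism of C(P) induced by a lattice map g : P -> P,
   e^lambda |-> e^{g lambda}, C-linear *)
Definition polyact n (g : wt n -> wt n) (p : {mpoly CC[n]}) : KP n :=
  \sum_(m <- msupp p) tofrac (p@_m)%:MP * epow (g (mono_wt m)).
Definition fieldact n (g : wt n -> wt n) (f : KP n) : KP n :=
  polyact g (\n_(repr f)) / polyact g (\d_(repr f)).

(* The algebra  C(P) (x) CQ^vee.  An element is represented by a finite *)
(* list of pure tensors (f, beta) standing for sum f (x) t_beta; two     *)
(* lists represent the same element iff their coefficient functions      *)
(* Q^vee -> C(P) agree.                                                  *)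
Definition Cspace (n : nat) := seq (KP n * cowt n).

Definition coefCsp n (xi : Cspace n) (b : cowt n) : KP n :=
  \sum_(p <- xi | p.2 == b) p.1.

Definition eqCsp n (xi xi' : Cspace n) : Prop :=
  forall b, coefCsp xi b = coefCsp xi' b.

Definition mulCsp n (xi xi' : Cspace n) : Cspace n :=
  [seq (p.1 * q.1, p.2 + q.2) | p <- xi, q <- xi'].

Definition Di n (A : 'M[int]_n) (i : 'I_n) (xi : Cspace n) : Cspace n :=
  let ea := epow (alpha A i) in
  flatten [seq [:: (p.1 / (1 - ea), p.2);
                   (- (ea * fieldact (s_wt A i) p.1) / (1 - ea), s_co A i p.2)]
          | p <- xi].

Definition D0 n (th : wt n) (thv : cowt n) (xi : Cspace n) : Cspace n :=
  let e := epow (- th) in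
  flatten [seq [:: (p.1 / (1 - e), p.2);
                   (- (e * fieldact (refl_wt th thv) p.1) / (1 - e),
                    refl_co th thv (p.2 - thv))]
          | p <- xi].

(* Main.v *)
Require Import Defs.
From HB Require Import structures.
From mathcomp Require Import all_boot all_order all_algebra.
Import Order.TTheory GRing.Theory Num.Theory.
From mathcomp Require Import complex.
From mathcomp Require Import Rstruct.
From mathcomp Require Import mpoly.
From mathcomp Require Import zify ring.
Local Open Scope ring_scope.
Set Implicit Arguments. Unset Strict Implicit. Unset Printing Implicit Defensive.

Section Frac.
Variable R : idomainType.
Lemma pi_mul_den (r : {ratio R}) :
  (\pi_({fraction R})%qT r) * tofrac (\d_r) = tofrac (\n_r).
Proof.
unlock tofrac.
rewrite [_ * _]piE.
apply/eqmodP; rewrite /= FracField.equivfE /= !numden_Ratio ?mulf_neq0 ?oner_neq0 //.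
- by rewrite mulr1 mulr1 mulrC.
all: exact: denom_ratioP.
Qed.
Lemma frac_mul_den (x : {fraction R}) : x * tofrac (\d_(repr x)) = tofrac (\n_(repr x)).
Proof. by rewrite -pi_mul_den reprK. Qed.
Lemma frac_den_neq0 (x : {fraction R}) : tofrac (\d_(repr x)) != 0.
Proof. rewrite tofrac_eq0. exact: denom_ratioP. Qed.
Lemma frac_numden (x : {fraction R}) : x = tofrac (\n_(repr x)) / tofrac (\d_(repr x)).
Proof. rewrite -[in X in _ = X / _]frac_mul_den mulfK // tofrac_eq0. exact: denom_ratioP. Qed.
End Frac.

Section Epow.
Variable n : nat.
Implicit Types (l : wt n).

Lemma X_neq0 (i : 'I_n) : tofrac ('X_i : {mpoly CC[n]}) != 0.
Proof.
rewrite tofrac_eq0; apply/eqP => /(congr1 (mcoeff U_(i))).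
by rewrite mcoeffX mcoeff0 eqxx => /eqP; rewrite oner_eq0.
Qed.

Lemma epowD l l' : epow (l + l') = epow l * epow l'.
Proof.
rewrite /epow -big_split /=; apply: eq_bigr => i _.
by rewrite mxE expfzDr // X_neq0.
Qed.

Lemma epow0 : epow (0 : wt n) = 1.
Proof. by rewrite /epow big1 // => i _; rewrite mxE expr0z. Qed.

Lemma epow_neq0 l : epow l != 0.
Proof.
rewrite /epow; apply/prodf_neq0 => i _.
by rewrite expfz_eq0 negb_and X_neq0 orbT.
Qed.

Lemma epowN l : epow (- l) = (epow l)^-1.
Proof.
apply: (mulfI (epow_neq0 l)); rewrite -epowD subrr epow0 divff //.
exact: epow_neq0.
Qed.

Lemma epowB l l' : epow (l - l') = epow l / epow l'.
Proof. by rewrite epowD epowN. Qed.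

Lemma epow_sum (I : Type) (r : seq I) (F : I -> wt n) :
  epow (\sum_(i <- r) F i) = \prod_(i <- r) epow (F i).
Proof.
elim: r => [|a r IH]; first by rewrite !big_nil epow0.
by rewrite !big_cons epowD IH.
Qed.

Lemma epowMn l k : epow (l *+ k) = epow l ^+ k.
Proof. elim: k => [|k IH]; first by rewrite mulr0n epow0 expr0.
by rewrite mulrS epowD IH exprS. Qed.

Lemma epow_mono (m : 'X_{1..n}) : epow (mono_wt m) = tofrac 'X_[m].
Proof.
rewrite /epow mpolyXE_id rmorph_prod; apply: eq_bigr => i _.
by rewrite mxE rmorphXn.
Qed.

Lemma mono_wtD (m1 m2 : 'X_{1..n}) : mono_wt (m1 + m2)%MM = mono_wt m1 + mono_wt m2.
Proof. by apply/rowP => i; rewrite !mxE mnmDE PoszD. Qed.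

Lemma mono_wt_inj : injective (@mono_wt n).
Proof.
move=> m1 m2 /rowP E; apply/mnmP => i; move: (E i); rewrite !mxE.
by case.
Qed.

Definition posp l : 'X_{1..n} := [multinom absz ((l 0 i + (absz (l 0 i))%:Z)%R) | i < n].
Definition negp l : 'X_{1..n} := [multinom absz (l 0%R i) | i < n].
Lemma posnegP l : l = mono_wt (posp l) - mono_wt (negp l).
Proof.
apply/rowP => i; rewrite !mxE !mnmE.
lia.
Qed.
End Epow.


Section Act.
Variable n : nat.
Definition Fc : {rmorphism CC -> KP n} := (@tofrac _) \o (@mpolyC n CC).

Definition additive_inj (g : wt n -> wt n) :=
  (forall x y, g (x + y) = g x + g y) /\ injective g.

Variable g : wt n -> wt n.
Hypothesis gA : additive_inj g.

Lemma g0 : g 0 = 0.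
Proof. case: gA => gD _; apply: (@addrI _ (g 0)); by rewrite -gD !addr0. Qed.
Lemma gN x : g (- x) = - g x.
Proof. case: gA => gD _; apply/eqP; rewrite -addr_eq0 -gD addNr g0. by []. Qed.
Lemma gB x y : g (x - y) = g x - g y.
Proof. by case: gA => gD _; rewrite gD gN. Qed.
Lemma gsum (I : Type) (r : seq I) (F : I -> wt n) :
  g (\sum_(i <- r) F i) = \sum_(i <- r) g (F i).
Proof.
case: gA => gD _; elim: r => [|a r IH]; first by rewrite !big_nil g0.
by rewrite !big_cons gD IH.
Qed.
Lemma gMn x k : g (x *+ k) = g x *+ k.
Proof. case: gA => gD _; elim: k => [|k IH]; first by rewrite !mulr0n g0.
by rewrite !mulrS gD IH. Qed.

Lemma mono_wt_decomp (m : 'X_{1..n}) :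
  mono_wt m = \sum_(i < n) mono_wt U_(i)%MM *+ m i.
Proof.
apply/rowP => j; rewrite summxE (bigD1 j) //= big1 => [|i ne]; rewrite mulmxnE !mxE mnm1E.
  by rewrite eqxx addr0 /=; change (Posz 1) with (1 : int); rewrite natz.
case: eqP => [E|_]; first by rewrite E eqxx in ne.
by rewrite /= mul0rn.
Qed.

Definition hg (i : 'I_n) : KP n := epow (g (mono_wt U_(i)%MM)).

Lemma epow_g_mono m : epow (g (mono_wt m)) = mmap1 hg m.
Proof.
rewrite mono_wt_decomp gsum epow_sum /mmap1; apply: eq_bigr => i _.
by rewrite gMn epowMn.
Qed.

Lemma polyact_mmap p : polyact g p = mmap Fc hg p.
Proof.
rewrite /polyact /mmap; apply: eq_bigr => m _.
by rewrite epow_g_mono.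
Qed.

Lemma polyactD p q : polyact g (p + q) = polyact g p + polyact g q.
Proof. by rewrite !polyact_mmap mmapD. Qed.
Lemma polyactM p q : polyact g (p * q) = polyact g p * polyact g q.
Proof. by rewrite !polyact_mmap rmorphM. Qed.
Lemma polyact1 : polyact g 1 = 1.
Proof. by rewrite !polyact_mmap rmorph1. Qed.
Lemma polyactC c : polyact g c%:MP = tofrac c%:MP.
Proof. by rewrite !polyact_mmap mmapC. Qed.
Lemma polyactX m : polyact g 'X_[m] = epow (g (mono_wt m)).
Proof. by rewrite polyact_mmap mmapX epow_g_mono. Qed.

Lemma absz_shift (s : nat) (x : int) : (absz x <= s)%N -> (absz (s%:Z + x))%:Z = s%:Z + x.
Proof. lia. Qed.

Lemma polyact_neq0 p : p != 0 -> polyact g p != 0.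
Proof.
move=> pn0.
case: (gA) => gD ginj.
set S := msupp p.
pose N : 'X_{1..n} := [multinom (\sum_(m <- S) absz (g (mono_wt m) 0%R i))%N | i < n].
pose k (m : 'X_{1..n}) : 'X_{1..n} :=
  [multinom absz (((N i)%:Z + g (mono_wt m) 0 i)%R) | i < n].
have kE m : m \in S -> mono_wt (k m) = mono_wt N + g (mono_wt m).
  move=> mS; apply/rowP => i; rewrite !mxE !mnmE absz_shift //.
  by rewrite (bigD1_seq m) ?msupp_uniq //= leq_addr.
have kinj m1 m2 : m1 \in S -> m2 \in S -> k m1 = k m2 -> m1 = m2.
  move=> m1S m2S /(congr1 (@mono_wt n)); rewrite !kE // => /addrI /ginj.
  exact: mono_wt_inj.
have H : epow (mono_wt N) * polyact g p =
         tofrac (\sum_(m <- S) p@_m *: 'X_[k m]).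
  rewrite /polyact mulr_sumr rmorph_sum; apply: eq_big_seq => m mS.
  by rewrite mulrCA -epowD -kE // epow_mono -mul_mpolyC rmorphM.
apply/negP => /eqP P0; move: H; rewrite P0 mulr0 => /esym /eqP.
rewrite tofrac_eq0 => /eqP /(congr1 (mcoeff (k (mlead p)))).
have m0S : mlead p \in S by exact: mlead_supp.
rewrite mcoeff0 raddf_sum (bigD1_seq (mlead p)) ?msupp_uniq //= big1_seq.
  rewrite mcoeffZ mcoeffX eqxx mulr1 addr0 => E.
  by move: m0S; rewrite mcoeff_msupp -E eqxx.
move=> m /andP [ne mS]; rewrite mcoeffZ mcoeffX.
case: eqP => [E|]; last by rewrite mulr0.
by rewrite (kinj _ _ mS m0S E) eqxx in ne.
Qed.

End Act.


Section FAct.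
Variable n : nat.
Implicit Types (x y : KP n) (a b c d : {mpoly CC[n]}).

Lemma fracP x : exists a b, b != 0 /\ x = tofrac a / tofrac b.
Proof. exists (\n_(repr x)), (\d_(repr x)); split; last exact: frac_numden.
exact: denom_ratioP. Qed.

Lemma mpolyX_neq0 (m : 'X_{1..n}) : ('X_[m] : {mpoly CC[n]}) != 0.
Proof.
apply/eqP => /(congr1 (mcoeff m)).
by rewrite mcoeffX mcoeff0 eqxx => /eqP; rewrite oner_eq0.
Qed.

Variable g : wt n -> wt n.
Hypothesis gA : additive_inj g.

Lemma fieldact_frac a d : d != 0 ->
  fieldact g (tofrac a / tofrac d) = polyact g a / polyact g d.
Proof.
move=> dn0; rewrite /fieldact.
set x := tofrac a / tofrac d.
set a' := \n_(repr x); set d' := \d_(repr x).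
have d'n0 : d' != 0 := denom_ratioP _.
have E : a * d' = a' * d.
  apply/eqP; rewrite -tofrac_eq !rmorphM -eqr_div ?tofrac_eq0 //.
  by rewrite /a' /d' -frac_numden.
have : polyact g a * polyact g d' = polyact g a' * polyact g d.
  by rewrite -!(polyactM gA) E.
move=> /eqP; rewrite -eqr_div ?(polyact_neq0 gA) // => /eqP ->.
done.
Qed.

Lemma fieldact_tofrac a : fieldact g (tofrac a) = polyact g a.
Proof.
by rewrite -[tofrac a]divr1 -(rmorph1 (@tofrac {mpoly CC[n]})) fieldact_frac
  ?oner_neq0 // (polyact1 gA) divr1.
Qed.

Lemma fieldactD x y : fieldact g (x + y) = fieldact g x + fieldact g y.
Proof.
case: (fracP x) => a [b [bn0 ->]]; case: (fracP y) => c [d [dn0 ->]].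
rewrite addf_div ?tofrac_eq0 // -!rmorphM -rmorphD !fieldact_frac ?mulf_neq0 //.
by rewrite (polyactD gA) !(polyactM gA) addf_div ?(polyact_neq0 gA).
Qed.

Lemma fieldactM x y : fieldact g (x * y) = fieldact g x * fieldact g y.
Proof.
case: (fracP x) => a [b [bn0 ->]]; case: (fracP y) => c [d [dn0 ->]].
rewrite mulf_div -!rmorphM !fieldact_frac ?mulf_neq0 //.
by rewrite !(polyactM gA) mulf_div.
Qed.

Lemma fieldact0 : fieldact g 0 = 0.
Proof.
apply: (@addrI _ (fieldact g 0)); by rewrite -fieldactD !addr0.
Qed.

Lemma fieldact1 : fieldact g 1 = 1.
Proof. by rewrite -(rmorph1 (@tofrac {mpoly CC[n]})) fieldact_tofrac (polyact1 gA). Qed.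

Lemma fieldactN x : fieldact g (- x) = - fieldact g x.
Proof.
apply/eqP; rewrite -addr_eq0 -fieldactD addNr fieldact0 //.
Qed.

Lemma fieldactV x : fieldact g (x^-1) = (fieldact g x)^-1.
Proof.
case: (fracP x) => a [b [bn0 ->]].
have [->|an0] := eqVneq a 0.
  by rewrite rmorph0 mul0r invr0 -(rmorph0 (@tofrac {mpoly CC[n]})) fieldact_tofrac
    /polyact msupp0 big_nil invr0.
by rewrite invf_div !fieldact_frac // invf_div.
Qed.

Lemma fieldact_sum (I : Type) (r : seq I) (F : I -> KP n) :
  fieldact g (\sum_(i <- r) F i) = \sum_(i <- r) fieldact g (F i).
Proof.
elim: r => [|z r IH]; first by rewrite !big_nil fieldact0.
by rewrite !big_cons fieldactD IH.
Qed.

Lemma fieldact_epow l : fieldact g (epow l) = epow (g l).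
Proof.
rewrite {1}(posnegP l) epowB !epow_mono fieldact_frac ?mpolyX_neq0 //.
by rewrite !(polyactX gA) -epowB -(gB gA) -posnegP.
Qed.
End FAct.

Lemma fieldact_ext n (g g' : wt n -> wt n) x : g =1 g' -> fieldact g x = fieldact g' x.
Proof.
move=> E; rewrite /fieldact /polyact; congr (_ / _); apply: eq_bigr => m _; by rewrite E.
Qed.

Lemma additive_inj_comp n (g h : wt n -> wt n) :
  additive_inj g -> additive_inj h -> additive_inj (fun l => g (h l)).
Proof.
move=> [gD gi] [hD hi]; split; first by move=> x y; rewrite hD gD.
by move=> x y /gi /hi.
Qed.

Lemma additive_inj_id n : additive_inj (fun l : wt n => l).
Proof. by split. Qed.

Lemma fieldact_comp n (g h : wt n -> wt n) x :
  additive_inj g -> additive_inj h ->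
  fieldact g (fieldact h x) = fieldact (fun l => g (h l)) x.
Proof.
move=> gA hA.
have P p : fieldact g (polyact h p) = polyact (fun l => g (h l)) p.
  rewrite /polyact fieldact_sum //; apply: eq_bigr => m _.
  by rewrite fieldactM // fieldact_tofrac // polyactC // fieldact_epow.
case: (fracP x) => a [b [bn0 ->]].
rewrite !fieldact_frac ?additive_inj_comp //.
  by rewrite (fieldactM gA) (fieldactV gA) !P.
exact: additive_inj_comp.
Qed.

Lemma fieldact_id n (x : KP n) : fieldact (fun l => l) x = x.
Proof.
have P p : polyact (fun l : wt n => l) p = tofrac p.
  rewrite {2}(mpolyE p) rmorph_sum /polyact; apply: eq_bigr => m _.
  by rewrite epow_mono -rmorphM mul_mpolyC.
case: (fracP x) => a [b [bn0 ->]].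
rewrite fieldact_frac //; first by rewrite !P.
exact: additive_inj_id.
Qed.


Lemma mxzE (m n : nat) (A : 'M[int]_(m, n)) z i j : (A *~ z) i j = A i j * z.
Proof.
case: z => k; first by rewrite -pmulrn mulmxnE -mulrzz.
by rewrite /= mxE mulmxnE NegzE mulrN -mulrzz -mulNrz -[in RHS]pmulrn.
Qed.

Section Weyl.
Variable n : nat.
Variable A : 'M[int]_n.
Hypothesis A2 : forall i, A i i = 2.
Implicit Types (l x y : wt n) (b c : cowt n).

Lemma wpairDl x y b : wpair (x + y) b = wpair x b + wpair y b.
Proof. by rewrite /wpair -big_split; apply: eq_bigr => i _; rewrite mxE mulrDl. Qed.
Lemma wpairDr l b c : wpair l (b + c) = wpair l b + wpair l c.
Proof. by rewrite /wpair -big_split; apply: eq_bigr => i _; rewrite mxE mulrDr. Qed.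
Lemma wpairNl x b : wpair (- x) b = - wpair x b.
Proof. by rewrite /wpair -sumrN; apply: eq_bigr => i _; rewrite mxE mulNr. Qed.
Lemma wpairNr l b : wpair l (- b) = - wpair l b.
Proof. by rewrite /wpair -sumrN; apply: eq_bigr => i _; rewrite mxE mulrN. Qed.
Lemma wpairZl x z b : wpair (x *~ z) b = wpair x b * z.
Proof. by rewrite /wpair mulr_suml; apply: eq_bigr => i _; rewrite mxzE mulrAC. Qed.
Lemma wpairZr l b z : wpair l (b *~ z) = wpair l b * z.
Proof. by rewrite /wpair mulr_suml; apply: eq_bigr => i _; rewrite mxzE mulrA. Qed.

Lemma wpair_aa i : wpair (alpha A i) (alphav i) = 2.
Proof.
rewrite /wpair (bigD1 i) //= big1 => [|j ne]; rewrite !mxE.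
  by rewrite eqxx mulr1 addr0 A2.
by case: eqP => [E|_]; [rewrite E eqxx in ne | rewrite mulr0].
Qed.

Lemma s_wtD i x y : s_wt A i (x + y) = s_wt A i x + s_wt A i y.
Proof. by rewrite /s_wt /refl_wt wpairDl mulrzDr opprD addrACA. Qed.
Lemma s_wtZ i x z : s_wt A i (x *~ z) = s_wt A i x *~ z.
Proof. by rewrite /s_wt /refl_wt wpairZl mulrzBl mulrzA. Qed.
Lemma s_coD i b c : s_co A i (b + c) = s_co A i b + s_co A i c.
Proof. by rewrite /s_co /refl_co wpairDr mulrzDr opprD addrACA. Qed.
Lemma s_coZ i b z : s_co A i (b *~ z) = s_co A i b *~ z.
Proof. by rewrite /s_co /refl_co wpairZr mulrzBl mulrzA. Qed.

Lemma s_wtK i l : s_wt A i (s_wt A i l) = l.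
Proof.
rewrite /s_wt /refl_wt wpairDl wpairNl wpairZl wpair_aa.
set c := wpair l _.
have -> : c - 2 * c = - c by rewrite mulr_natl mulr2n opprD addrA subrr sub0r.
by rewrite mulrNz opprK subrK.
Qed.

Lemma s_coK i b : s_co A i (s_co A i b) = b.
Proof.
rewrite /s_co /refl_co wpairDr wpairNr wpairZr wpair_aa.
set c := wpair _ b.
have -> : c - 2 * c = - c by rewrite mulr_natl mulr2n opprD addrA subrr sub0r.
by rewrite mulrNz opprK subrK.
Qed.

Lemma s_swap i l b : wpair (s_wt A i l) b = wpair l (s_co A i b).
Proof.
rewrite /s_wt /s_co /refl_wt /refl_co wpairDl wpairDr wpairNl wpairNr wpairZl wpairZr.
by rewrite mulrC.
Qed.

Lemma act_wtD w x y : act_wt A w (x + y) = act_wt A w x + act_wt A w y.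
Proof. by elim: w => //= j w IH; rewrite IH s_wtD. Qed.
Lemma act_wtZ w x z : act_wt A w (x *~ z) = act_wt A w x *~ z.
Proof. by elim: w => //= j w IH; rewrite IH s_wtZ. Qed.
Lemma act_wt0 w : act_wt A w 0 = 0.
Proof. apply: (@addrI _ (act_wt A w 0)); by rewrite -act_wtD !addr0. Qed.
Lemma act_wtB w x y : act_wt A w (x - y) = act_wt A w x - act_wt A w y.
Proof.
rewrite act_wtD; congr (_ + _); apply/eqP.
by rewrite -addr_eq0 addrC -act_wtD addrN act_wt0.
Qed.
Lemma act_coD w b c : act_co A w (b + c) = act_co A w b + act_co A w c.
Proof. by elim: w => //= j w IH; rewrite IH s_coD. Qed.
Lemma act_coZ w b z : act_co A w (b *~ z) = act_co A w b *~ z.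
Proof. by elim: w => //= j w IH; rewrite IH s_coZ. Qed.
Lemma act_co0 w : act_co A w 0 = 0.
Proof. apply: (@addrI _ (act_co A w 0)); by rewrite -act_coD !addr0. Qed.
Lemma act_coB w b c : act_co A w (b - c) = act_co A w b - act_co A w c.
Proof.
rewrite act_coD; congr (_ + _); apply/eqP.
by rewrite -addr_eq0 addrC -act_coD addrN act_co0.
Qed.

Lemma act_wt_cat w1 w2 l : act_wt A (w1 ++ w2) l = act_wt A w1 (act_wt A w2 l).
Proof. by rewrite /act_wt foldr_cat. Qed.
Lemma act_co_cat w1 w2 b : act_co A (w1 ++ w2) b = act_co A w1 (act_co A w2 b).
Proof. by rewrite /act_co foldr_cat. Qed.

Lemma act_wt_revK w l : act_wt A w (act_wt A (rev w) l) = l.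
Proof.
elim: w l => //= j w IH l.
by rewrite rev_cons -cats1 act_wt_cat /= IH s_wtK.
Qed.
Lemma act_co_revK w b : act_co A w (act_co A (rev w) b) = b.
Proof.
elim: w b => //= j w IH b.
by rewrite rev_cons -cats1 act_co_cat /= IH s_coK.
Qed.
Lemma act_wt_Krev w l : act_wt A (rev w) (act_wt A w l) = l.
Proof. by rewrite -{2}(revK w) act_wt_revK. Qed.

Lemma wpair_act_rev w l b : wpair (act_wt A (rev w) l) b = wpair l (act_co A w b).
Proof.
elim: w l b => //= j w IH l b.
by rewrite rev_cons -cats1 act_wt_cat /= IH s_swap.
Qed.
Lemma wpair_act w l b : wpair (act_wt A w l) b = wpair l (act_co A (rev w) b).
Proof. by rewrite -{1}(revK w) wpair_act_rev. Qed.

Lemma act_wt_ai w : additive_inj (act_wt A w).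
Proof.
split; first exact: act_wtD.
by move=> x y /(congr1 (act_wt A (rev w))); rewrite !act_wt_Krev.
Qed.

Lemma refl_conj w i l :
  refl_wt (act_wt A w (alpha A i)) (act_co A w (alphav i)) l =
  act_wt A (w ++ i :: rev w) l.
Proof.
rewrite act_wt_cat /= /s_wt /refl_wt act_wtB act_wtZ act_wt_revK.
by rewrite wpair_act_rev.
Qed.

Lemma reflco_conj w i b :
  refl_co (act_wt A w (alpha A i)) (act_co A w (alphav i)) b =
  act_co A (w ++ i :: rev w) b.
Proof.
rewrite act_co_cat /= /s_co /refl_co act_coB act_coZ act_co_revK.
by rewrite wpair_act.
Qed.
End Weyl.


Section Comb.
Variable n : nat.
Local Notation PT := (KP n * cowt n)%type.

Lemma sum_flat2 (X : seq PT) (Q1 Q2 : PT -> PT) (G : PT -> KP n) :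
  \sum_(Q <- flatten [seq [:: Q1 q; Q2 q] | q <- X]) G Q =
  \sum_(q <- X) (G (Q1 q) + G (Q2 q)).
Proof.
elim: X => [|x X IH] /=; first by rewrite !big_nil.
by rewrite !big_cons IH addrA.
Qed.

Lemma sum_mul (X Y : seq PT) (G : PT -> KP n) :
  \sum_(Q <- mulCsp X Y) G Q =
  \sum_(p <- X) \sum_(q <- Y) G (p.1 * q.1, p.2 + q.2).
Proof.
rewrite /mulCsp; elim: X => [|x X IH] /=; first by rewrite !big_nil.
by rewrite big_cat /= IH big_cons big_map.
Qed.

Lemma coefCspE (X : seq PT) b :
  coefCsp X b = \sum_(p <- X) (if p.2 == b then p.1 else 0).
Proof. by rewrite /coefCsp big_mkcond. Qed.

Lemma refl_coD (g : wt n) gv x y : refl_co g gv (x + y) = refl_co g gv x + refl_co g gv y.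
Proof. by rewrite /refl_co wpairDr mulrzDr opprD addrACA. Qed.
Lemma sum_mul_flat2 (X Y : seq PT) (Q1 Q2 : PT -> PT) (G : PT -> KP n) :
  \sum_(Q <- mulCsp X (flatten [seq [:: Q1 q; Q2 q] | q <- Y])) G Q =
  \sum_(p <- X) \sum_(q <- Y)
     (G (p.1 * (Q1 q).1, p.2 + (Q1 q).2) + G (p.1 * (Q2 q).1, p.2 + (Q2 q).2)).
Proof.
rewrite sum_mul; apply: eq_bigr => p _.
exact: (sum_flat2 Y Q1 Q2 (fun Q => G (p.1 * Q.1, p.2 + Q.2))).
Qed.
Lemma addr_eq_sub (x y z : cowt n) : (x + y == z) = (x == z - y).
Proof. by apply/eqP/eqP => [<-|->]; [rewrite addrK | rewrite subrK]. Qed.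
End Comb.


Unset Implicit Arguments. Set Strict Implicit. Set Printing Implicit Defensive.
Theorem lemma2p6 (n : nat) (A : 'M[int]_n) (th : wt n) (thv : cowt n)
    (xi xi' : Cspace n) :
  cartan_finite_indec A -> highest_root A th -> coroot_of A th thv ->
  (forall i : 'I_n, eqCsp (Di A i xi) xi) ->
  eqCsp (D0 th thv (mulCsp xi xi')) (mulCsp xi (D0 th thv xi')).
Proof.
move=> [_ [A2 _ _ _ _]] _ [w [i [Eth Ethv]]] HD.
set c := coefCsp xi.
have sinv j b : fieldact (s_wt A j) (c b) = c (s_co A j b).
  have sjA : additive_inj (s_wt A j) := act_wt_ai A2 [:: j].
  set ea := epow (alpha A j).
  have Hb b' : c (s_co A j b') / (1 - ea) + fieldact (s_wt A j) (c b') * (- ea / (1 - ea))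
      = c (s_co A j b').
    have := HD j (s_co A j b').
    rewrite /Di -/ea !coefCspE (sum_flat2 _ (fun p => (p.1 / (1 - ea), p.2))
      (fun p => (- (ea * fieldact (s_wt A j) p.1) / (1 - ea), s_co A j p.2))) big_split /=.
    rewrite /c !coefCspE => H; symmetry; rewrite -{1}H; symmetry.
    rewrite (fieldact_sum sjA) !mulr_suml; congr (_ + _).
      by apply: eq_bigr => p _; case: ifP; rewrite ?mul0r.
    apply: eq_bigr => p _.
    have -> : (s_co A j p.2 == s_co A j b') = (p.2 == b').
      apply/eqP/eqP => [E|->] //; by rewrite -(s_coK A2 j p.2) E s_coK.
    case: ifP => _; last by rewrite (fieldact0 sjA) mul0r.
    by rewrite mulrA mulrN [ea * _]mulrC.
  have [e1|e1] := eqVneq (1 - ea) 0.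
    have cz b' : c b' = 0.
      have := Hb (s_co A j b'); rewrite s_coK // e1 invr0 !mulr0 add0r.
      by move=> <-.
    by rewrite !cz (fieldact0 sjA).
  have := Hb b; move/(congr1 (fun x => x - c (s_co A j b) / (1 - ea))).
  rewrite addrAC subrr add0r => E.
  have H2 : c (s_co A j b) - c (s_co A j b) / (1 - ea) = c (s_co A j b) * (- ea / (1 - ea)).
    set d := 1 - ea.
    have -> : - ea = d - 1 by rewrite /d addrAC subrr add0r.
    by rewrite mulrBl divff // mul1r mulrBr mulr1.
  have kn0 : - ea / (1 - ea) != 0.
    have ean0 : ea != 0 := epow_neq0 _.
    rewrite mulf_eq0 negb_or oppr_eq0; apply/andP; split; first exact: ean0.
    rewrite invr_eq0.
    exact: e1.
  apply: (mulIf kn0); rewrite E H2; reflexivity.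
have winv w' : forall b, fieldact (act_wt A w') (c b) = c (act_co A w' b).
  elim: w' => [|j w' IH] b.
    by rewrite (@fieldact_ext _ _ (fun l => l)) // fieldact_id.
  rewrite (@fieldact_ext _ _ (fun l => s_wt A j (act_wt A w' l))) //.
  rewrite -fieldact_comp; last exact: act_wt_ai.
    by rewrite IH sinv.
  exact: (act_wt_ai A2 [:: j]).
set W := w ++ i :: rev w.
have WA : additive_inj (act_wt A W) := act_wt_ai A2 W.
have Fext x : fieldact (refl_wt th thv) x = fieldact (act_wt A W) x.
  by apply: fieldact_ext => l; rewrite Eth Ethv refl_conj.
have rho b : refl_co th thv b = act_co A W b.
  by rewrite Eth Ethv reflco_conj.
have revW : rev W = W by rewrite /W rev_cat rev_cons revK -cats1 -catA.
have rhoK b : act_co A W (act_co A W b) = b.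
  by rewrite -{2}revW act_co_revK.
have key b' : \sum_(p <- xi) (if act_co A W p.2 == b' then fieldact (act_wt A W) p.1 else 0)
    = \sum_(p <- xi) (if p.2 == b' then p.1 else 0).
  rewrite -coefCspE -/c -[in RHS](rhoK b') -winv /c coefCspE (fieldact_sum WA).
  apply: eq_bigr => p _.
  have -> : (act_co A W p.2 == b') = (p.2 == act_co A W b').
    by apply/eqP/eqP => [<-|->]; rewrite rhoK.
  case: ifP => _ //; symmetry; exact: (fieldact0 WA).
move=> b; rewrite !coefCspE /D0.
set e := epow (- th).
set F := fieldact (refl_wt th thv).
rewrite (sum_mul_flat2 xi xi' (fun p => (p.1 / (1 - e), p.2))
  (fun p => (- (e * F p.1) / (1 - e), refl_co th thv (p.2 - thv)))).
rewrite (sum_flat2 (mulCsp xi xi') (fun p => (p.1 / (1 - e), p.2))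
  (fun p => (- (e * F p.1) / (1 - e), refl_co th thv (p.2 - thv)))) sum_mul /=.
under [LHS]eq_bigr do rewrite big_split.
under [RHS]eq_bigr do rewrite big_split.
rewrite !big_split /=; congr (_ + _).
  apply: eq_bigr => p _; apply: eq_bigr => q _.
  rewrite mulrA; reflexivity.
rewrite [LHS]exchange_big [RHS]exchange_big /F.
apply: eq_bigr => q _; rewrite !Fext.
set k := - (e * fieldact (act_wt A W) q.1) / (1 - e).
set bq := b - refl_co th thv (q.2 - thv).
transitivity ((\sum_(p <- xi) (if act_co A W p.2 == bq
    then fieldact (act_wt A W) p.1 else 0)) * k).
  rewrite mulr_suml; apply: eq_bigr => p _.
  rewrite -addrA refl_coD rho addr_eq_sub -/bq.
  case: ifP => _; last by rewrite mul0r.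
  rewrite Fext (fieldactM WA) /k mulrCA -mulrN -mulrA; reflexivity.
rewrite key mulr_suml; apply: eq_bigr => p _.
rewrite addr_eq_sub -/bq; case: ifP => _; last by rewrite mul0r.
reflexivity.
Qed.
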